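(* Let $(S_t)_{t\in\mathbb{Z}}$ be a stationary process over a finite alphabet $\mathcal{A}$ that is order-$R$ Markovian for some integer $R\ge 1$, i.e. $\Pr(S_i\mid \ldots,S_{i-2},S_{i-1})=\Pr(S_i\mid S_{i-R},\ldots,S_{i-1})$. Then its synchronization information $\mathbf{S}$ and transient information $\mathbf{T}$ (defined below) satisfy $$\mathbf{S}=\mathbf{T}+\tfrac12 R(R+1)\,h_\mu .$$
   Context: For $L\ge1$ let $H(L)=-\sum_{s^L\in\mathcal{A}^L}\Pr(s^L)\log_2\Pr(s^L)$ be the Shannon entropy of the block $S_1\cdots S_L$, and set $H(0)=0$. Let $h_\mu(L)=H(L)-H(L-1)$ for $L\ge1$, let $h_\mu=\lim_{L\to\infty}H(L)/L$ (the entropy rate), and let $\mathbf{E}=\sum_{L=1}^\infty[h_\mu(L)-h_\mu]$ (the excess entropy). For an order-$R$ Markov process $\mathbf{E}$ is finite. The transient information is $\mathbf{T}=\sum_{L=0}^\infty[\mathbf{E}+h_\mu L-H(L)]$. Synchronization: the process is modeled as a Markov chain whose states are the $R$-blocks (states are in one-to-one correspondence with the words of length $R$; transitions slide the block by one symbol), with stationary distribution $\pi(s^R)=\Pr(s^R)$. An observer who knows this model but not the current state starts with distribution $\pi$ over the state $(S_1,\ldots,S_R)$, and after observing $s_1\cdots s_L$ holds the conditional distribution $\Pr(v\mid s^L)$ over states $v$ consistent with the observations: for $L\le R$ this is the conditional distribution of the $R$-block $(S_1,\ldots,S_R)$ given $S_1\cdots S_L=s^L$, and for $L\ge R$ the current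 state (the last $R$ observed symbols) is determined. The average state-uncertainty is $\mathcal{H}(L)=-\sum_{s^L}\Pr(s^L)\sum_v\Pr(v\mid s^L)\log_2\Pr(v\mid s^L)$, and the synchronization information is $\mathbf{S}=\sum_{L=0}^\infty\mathcal{H}(L)$. *)

(* Defs.v *)
From HB Require Import structures.
From mathcomp Require Import all_boot all_order all_algebra.
From mathcomp Require Import all_classical all_reals all_analysis.
Set Implicit Arguments. Unset Strict Implicit. Unset Printing Implicit Defensive.
Import Order.TTheory GRing.Theory Num.Theory.
Local Open Scope ring_scope.

Section Defs.
Variables (R : realType) (A : finType).

Definition xlog2 (x : R) : R := if x == 0 then 0 else x * (ln x / ln 2).

(* A stationary process over A, given by its block probabilities
   p w = Pr(S_1 ... S_|w| = w) (finite-dimensional distributions; they are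
   consistent under extension on the right and, by stationarity, on the left). *)
Definition stationary_process (p : seq A -> R) : Prop :=
  [/\ p [::] = 1,
      (forall w, 0 <= p w),
      (forall w, p w = \sum_(a : A) p (rcons w a)) &
      (forall w, p w = \sum_(a : A) p (a :: w))].

(* Order-R Markov: Pr(S_{L+1} | S_1..S_L) = Pr(S_{L+1} | S_{L-R+1}..S_L),
   written without division:
   Pr(w a) Pr(last R of w) = Pr(w) Pr((last R of w) a), for |w| >= R. *)
Definition markov_order (p : seq A -> R) (Rm : nat) : Prop :=
  forall (w : seq A) (a : A), (Rm <= size w)%N ->
    p (rcons w a) * p (drop (size w - Rm) w) =
    p w * p (rcons (drop (size w - Rm) w) a).

Definition block_entropy (p : seq A -> R) (L : nat) : R :=
  - \sum_(w : L.-tuple A) xlog2 (p w).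

(* Observer's conditional distribution over states v (R-blocks) after
   observing s (of length L). *)
Definition cond_state (p : seq A -> R) (Rm L : nat) (s : L.-tuple A)
    (v : Rm.-tuple A) : R :=
  if (L <= Rm)%N then
    (if take L (tval v) == tval s then p v / p s else 0)
  else (if tval v == drop (L - Rm) (tval s) then 1 else 0).

Definition state_uncertainty (p : seq A -> R) (Rm L : nat) : R :=
  - \sum_(s : L.-tuple A) p s * \sum_(v : Rm.-tuple A) xlog2 (@cond_state p Rm L s v).

End Defs.

(* Main.v *)
Require Import Defs.
From HB Require Import structures.
From mathcomp Require Import all_boot all_order all_algebra.
From mathcomp Require Import all_classical all_reals all_analysis.
From mathcomp Require Import ring lra.
Import Order.TTheory GRing.Theory Num.Theory.
Import numFieldNormedType.Exports.
Local Open Scope ring_scope.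
Set Implicit Arguments. Unset Strict Implicit. Unset Printing Implicit Defensive.
Import numFieldNormedType.Exports.

Section Tup.
Variables (R : realType) (A : finType).

Lemma sum_tuple0 (F : seq A -> R) : \sum_(w : 0.-tuple A) F w = F [::].
Proof.
by rewrite (big_pred1 [tuple]) // => t; apply/esym/eqP; exact: tuple0.
Qed.

Lemma sum_tuple_cons n (F : seq A -> R) :
  \sum_(w : n.+1.-tuple A) F w = \sum_(a : A) \sum_(w : n.-tuple A) F (a :: w).
Proof.
rewrite pair_big /=.
rewrite (reindex (fun x : A * n.-tuple A => [tuple of x.1 :: x.2])) /=.
  by apply: eq_bigr => -[a w].
exists (fun t : n.+1.-tuple A => (thead t, [tuple of behead t])).
  by move=> [a w] _ /=; congr pair; apply: val_inj.
by move=> t _; rewrite [RHS]tuple_eta; apply: val_inj.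
Qed.

Lemma sum_tuple_rcons n (F : seq A -> R) :
  \sum_(w : n.+1.-tuple A) F w = \sum_(w : n.-tuple A) \sum_(a : A) F (rcons w a).
Proof.
elim: n F => [|n IH] F.
  rewrite sum_tuple_cons (sum_tuple0 (fun w => \sum_a F (rcons w a))); apply: eq_bigr => a _.
  by rewrite (sum_tuple0 (fun w => F (a :: w))).
rewrite sum_tuple_cons (sum_tuple_cons n (fun w => \sum_a F (rcons w a))).
by apply: eq_bigr => a _; rewrite (IH (fun w => F (a :: w))).
Qed.

Lemma sum_tuple_cat m k n (F : seq A -> R) : (m + k)%N = n ->
  \sum_(w : n.-tuple A) F w =
  \sum_(u : m.-tuple A) \sum_(v : k.-tuple A) F (u ++ v).
Proof.
move=> <-; elim: k F => [|k IH] F.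
  rewrite addn0; apply: eq_bigr => u _; by rewrite (sum_tuple0 (fun v => F (u ++ v))) cats0.
rewrite addnS sum_tuple_rcons (IH (fun w => \sum_a F (rcons w a))); apply: eq_bigr => u _.
by rewrite (sum_tuple_rcons _ (fun v => F (u ++ v))); apply: eq_bigr => v _; apply: eq_bigr => a _; rewrite rcons_cat.
Qed.

Lemma xlog2E (x : R) : xlog2 x = x * (ln x / ln 2).
Proof. by rewrite /xlog2; case: eqP => [->|//]; rewrite mul0r. Qed.

Lemma xlog2_0 : xlog2 (0 : R) = 0.
Proof. by rewrite /xlog2 eqxx. Qed.

Lemma xlog2_1 : xlog2 (1 : R) = 0.
Proof. by rewrite xlog2E ln1 mul0r mulr0. Qed.

Lemma xlog2M (x y : R) : 0 <= x -> 0 <= y ->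
  xlog2 (x * y) = y * xlog2 x + x * xlog2 y.
Proof.
rewrite le0r => /orP[/eqP->|x0]; first by rewrite mul0r xlog2_0 mulr0 mul0r addr0.
rewrite le0r => /orP[/eqP->|y0]; first by rewrite mulr0 xlog2_0 mulr0 mul0r addr0.
rewrite !xlog2E lnM ?posrE //; ring.
Qed.

Lemma xlog2_div (x y : R) : 0 <= x -> 0 <= y -> (y = 0 -> x = 0) ->
  y * xlog2 (x / y) = xlog2 x - x * (ln y / ln 2).
Proof.
move=> x0; rewrite le0r => /orP[/eqP->|y0] h.
  by rewrite h // mul0r xlog2_0 mul0r subr0.
move: x0; rewrite le0r => /orP[/eqP->|x0].
  by rewrite mul0r xlog2_0 mulr0 mul0r subr0.
rewrite !xlog2E ln_div ?posrE //.
have yn0 : y != 0 by rewrite gt_eqF.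
have l2 : ln (2:R) != 0 by rewrite gt_eqF // ln_gt0 // ltr1n.
by field; rewrite l2 yn0.
Qed.
End Tup.

Section Proc.
Variables (R : realType) (A : finType) (p : seq A -> R).
Hypothesis hp : stationary_process p.

Lemma p_ge0 w : 0 <= p w.
Proof. by case: hp. Qed.

Lemma sum_ge_term (F : A -> R) a : (forall b, 0 <= F b) -> F a <= \sum_b F b.
Proof.
move=> F0; rewrite (bigD1 a) //= lerDl; apply: sumr_ge0 => b _; exact: F0.
Qed.

Lemma p_rcons_le w a : p (rcons w a) <= p w.
Proof. case: hp => _ _ hr _; rewrite [p w]hr; apply: sum_ge_term => b; exact: p_ge0. Qed.

Lemma p_cons_le w a : p (a :: w) <= p w.
Proof. case: hp => _ _ _ hl; rewrite [p w]hl; apply: sum_ge_term => b; exact: p_ge0. Qed.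

Lemma p_catl_le u s : p (u ++ s) <= p s.
Proof.
elim: u => [//|a u IH] /=; exact: le_trans (p_cons_le _ _) IH.
Qed.

Lemma p_catr_le s u : p (s ++ u) <= p s.
Proof.
elim/last_ind: u => [|u a IH]; first by rewrite cats0.
by rewrite -rcons_cat; exact: le_trans (p_rcons_le _ _) IH.
Qed.

Lemma p_eq0 w v : p v = 0 -> p w <= p v -> p w = 0.
Proof. move=> -> h; apply/eqP; rewrite eq_le h p_ge0. by []. Qed.

Lemma sum_right k s : \sum_(v : k.-tuple A) p (s ++ v) = p s.
Proof.
elim: k => [|k IH]; first by rewrite (sum_tuple0 (fun v => p (s ++ v))) cats0.
rewrite (sum_tuple_rcons _ (fun v => p (s ++ v))) -[RHS]IH.
apply: eq_bigr => v _; case: hp => _ _ hr _.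
by rewrite [p (s ++ v)]hr; apply: eq_bigr => a _; rewrite rcons_cat.
Qed.

Lemma sum_left k : forall s, \sum_(u : k.-tuple A) p (u ++ s) = p s.
Proof.
elim: k => [|k IH] s; first by rewrite (sum_tuple0 (fun u => p (u ++ s))).
rewrite (sum_tuple_rcons _ (fun u => p (u ++ s))).
under eq_bigr do under eq_bigr do rewrite cat_rcons.
rewrite exchange_big /=.
case: hp => _ _ _ hl; rewrite [RHS]hl; apply: eq_bigr => a _; exact: IH.
Qed.


Lemma xlog2_div_p (s w : seq A) :
  p s * xlog2 (p (s ++ w) / p s) = xlog2 (p (s ++ w)) - p (s ++ w) * (ln (p s) / ln 2).
Proof.
apply: xlog2_div; rewrite ?p_ge0 // => h; exact: p_eq0 h (p_catr_le _ _).
Qed.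

Variable Rm : nat.
Hypothesis hm : markov_order p Rm.

Lemma su_le L : (L <= Rm)%N ->
  state_uncertainty p Rm L = block_entropy p Rm - block_entropy p L.
Proof.
move=> hL.
have step : forall s : L.-tuple A,
  p s * \sum_(v : Rm.-tuple A) xlog2 (cond_state p s v) =
  \sum_(w : (Rm - L).-tuple A) xlog2 (p (s ++ w)) - xlog2 (p s).
  move=> s; rewrite /cond_state hL.
  rewrite (sum_tuple_cat (fun v : seq A => xlog2 (if take L v == s then p v / p s else 0)) (subnKC hL)).
  under eq_bigr => u _ do under eq_bigr => w _ do rewrite take_size_cat ?size_tuple //.
  rewrite (bigD1 s) //= [X in _ + X]big1 ?addr0; last first.
    move=> u us; apply: big1 => w _.
    have us' : (tval u == tval s) = false := negbTE us.
    by rewrite us' xlog2_0.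
  rewrite eqxx mulr_sumr.
  rewrite (eq_bigr (fun w : (Rm - L).-tuple A => xlog2 (p (s ++ w)) - p (s ++ w) * (ln (p s) / ln 2))); last first.
    by move=> w _; rewrite xlog2_div_p.
  by rewrite sumrB -mulr_suml sum_right // -xlog2E.
rewrite /state_uncertainty.
under eq_bigr => s _ do rewrite step.
rewrite sumrB /block_entropy (sum_tuple_cat (fun v => xlog2 (p v)) (subnKC hL)).
by rewrite opprB opprK addrC.
Qed.

Lemma su_gt L : (Rm < L)%N -> state_uncertainty p Rm L = 0.
Proof.
move=> hL; rewrite /state_uncertainty big1 ?oppr0 // => s _.
rewrite big1 ?mulr0 // => v _; rewrite /cond_state leqNgt hL /=.
by case: ifP => _; rewrite ?xlog2_1 ?xlog2_0.
Qed.

Lemma markov_rcons w a : (Rm <= size w)%N ->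
  p (rcons w a) = p w * (p (rcons (drop (size w - Rm) w) a) / p (drop (size w - Rm) w)).
Proof.
move=> hw; have := hm a hw; set s := drop _ w => e.
have [s0|s0] := eqVneq (p s) 0.
  have w0 : p w = 0.
    by apply: (p_eq0 s0); rewrite -{1}(cat_take_drop (size w - Rm) w); exact: p_catl_le.
  by rewrite w0 mul0r; exact: p_eq0 w0 (p_rcons_le _ _).
by rewrite mulrA -e mulfK.
Qed.

Definition gfun (s : seq A) := \sum_(a : A) xlog2 (p (rcons s a) / p s).

Lemma ent_rcons w : (Rm <= size w)%N ->
  \sum_(a : A) xlog2 (p (rcons w a)) = xlog2 (p w) + p w * gfun (drop (size w - Rm) w).
Proof.
move=> hw; set s := drop _ w.
under eq_bigr => a _ do rewrite markov_rcons // xlog2M ?p_ge0 ?divr_ge0 ?p_ge0 //.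
rewrite big_split /= -mulr_suml -mulr_sumr -mulr_suml.
case: hp => _ _ hr _; rewrite -hr; congr (_ + _).
have [s0|s0] := eqVneq (p s) 0; last by rewrite divff // mul1r.
have w0 : p w = 0.
  by apply: (p_eq0 s0); rewrite -{1}(cat_take_drop (size w - Rm) w); exact: p_catl_le.
by rewrite w0 xlog2_0 mulr0.
Qed.

Lemma ent_diff L : (Rm <= L)%N ->
  block_entropy p L.+1 - block_entropy p L = - \sum_(s : Rm.-tuple A) p s * gfun s.
Proof.
move=> hL; rewrite /block_entropy (sum_tuple_rcons _ (fun w => xlog2 (p w))).
under eq_bigr => w _ do rewrite ent_rcons ?size_tuple //.
rewrite big_split /= opprK opprD addrAC addNr add0r; congr (- _).
rewrite (sum_tuple_cat (fun w => p w * gfun (drop (L - Rm) w)) (subnK hL)).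
have e (u : (L - Rm).-tuple A) (v : Rm.-tuple A) : drop (L - Rm) (u ++ v) = v by rewrite drop_size_cat // size_tuple.
rewrite exchange_big /=; apply: eq_bigr => s _.
rewrite -[in RHS](sum_left (L - Rm) s) mulr_suml; apply: eq_bigr => u _; by rewrite e.
Qed.

End Proc.

Local Open Scope classical_set_scope.
Lemma series_ev0 (R : realType) (u : nat -> R) N :
  (forall k, (N <= k)%N -> u k = 0) ->
  series u @ \oo --> \sum_(0 <= k < N) u k.
Proof.
move=> u0; apply: cvg_near_cst; exists N => // n /= hn.
rewrite /series /= (big_cat_nat (leq0n N) hn) /= [X in _ + X]big_nat_cond.
by rewrite [X in _ + X]big1 ?addr0 // => k /andP[/andP[hk _] _]; exact: u0.
Qed.

Lemma sum_tri (R : realType) n :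
  \sum_(0 <= L < n) (n%:R - L%:R : R) = (n * n.+1)%:R / 2.
Proof.
elim: n => [|n IH]; first by rewrite big_geq // mul0n mul0r.
rewrite big_nat_recr //=.
rewrite (eq_bigr (fun L => (n%:R - L%:R) + 1)); last by move=> i _; rewrite -natr1; ring.
rewrite big_split /= IH sumr_const_nat subn0.
by rewrite !natrM -!natr1; field.
Qed.

Theorem theorem1 (R : realType) (A : finType) (p : seq A -> R) (Rm : nat) :
  stationary_process p -> (1 <= Rm)%N -> markov_order p Rm ->
  exists h E T S : R,
    [/\ (fun L : nat => block_entropy p L / L%:R) @ \oo --> h,
        (* E = sum_{L>=1} [h_mu(L) - h_mu] *)
        series (fun k : nat => block_entropy p k.+1 - block_entropy p k - h) @ \oo --> E,
        (* T = sum_{L>=0} [E + h_mu L - H(L)] *)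
        series (fun L : nat => E + h * L%:R - block_entropy p L) @ \oo --> T,
        (* S = sum_{L>=0} \mathcal{H}(L) *)
        series (fun L : nat => state_uncertainty p Rm L) @ \oo --> S &
        S = T + (Rm * Rm.+1)%:R / 2 * h].
Proof.
move=> hp hR hm.
set H := block_entropy p.
set h := H Rm.+1 - H Rm.
have hd L : (Rm <= L)%N -> H L.+1 - H L = h.
  by move=> hL; rewrite /h /H !(ent_diff hp hm) //.
have H0 : H 0%N = 0.
  rewrite /H /block_entropy (sum_tuple0 (fun w => xlog2 (p w))).
  by case: hp => -> _ _ _; rewrite xlog2_1 oppr0.
have Hlin L : (Rm <= L)%N -> H L = H Rm + (L%:R - Rm%:R) * h.
  move=> hL; rewrite -(subnK hL); elim: (L - Rm)%N => [|n IH].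
    by rewrite add0n subrr mul0r addr0.
  have := hd (n + Rm)%N (leq_addl _ _); rewrite addSn => e.
  rewrite -[H _](subrK (H (n + Rm)%N)) e IH !natrD -!natr1; ring.
set E := H Rm - Rm%:R * h.
set T := \sum_(0 <= L < Rm) (E + h * L%:R - H L).
set S := \sum_(0 <= L < Rm) (H Rm - H L).
exists h, E, T, S; split.
- rewrite -cvg_shiftS /=.
  have : (fun n => E * harmonic n + h) @ \oo --> E * 0 + h.
    apply: cvgD; last exact: cvg_cst.
    apply: cvgMl_tmp; exact: cvg_harmonic.
  rewrite mulr0 add0r; apply: cvg_trans; apply: near_eq_cvg.
  exists Rm => // n /= hn.
  rewrite Hlin; last exact: leqW.
  rewrite /E /=; field.
  by rewrite addrC natr1 pnatr_eq0.
- have -> : E = \sum_(0 <= k < Rm) (H k.+1 - H k - h).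
    rewrite big_split /= telescope_sumr // H0 subr0 sumrN sumr_const_nat subn0.
    by rewrite /E mulr_natl.
  apply: series_ev0 => k hk; rewrite hd // subrr //.
- apply: series_ev0 => L hL; rewrite Hlin // /E; ring.
- have -> : S = \sum_(0 <= L < Rm) state_uncertainty p Rm L.
    rewrite /S big_nat_cond [RHS]big_nat_cond.
    apply: eq_bigr => L /andP[/andP[_ hL] _]; by rewrite (su_le hp) // ltnW.
  apply: series_ev0 => L hL.
  rewrite leq_eqVlt in hL; case/orP: hL => [/eqP <-|hL].
    by rewrite (su_le hp) // subrr.
  exact: su_gt.
- rewrite /S /T -(sum_tri R Rm) mulr_suml -big_split /=.
  apply: eq_bigr => L _; rewrite /E; ring.
Qed.
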